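(* For every positive integer $n$: (a) $\displaystyle cl_b(n)=\sum_{k=0}^{n-1}cl_b(k)\big(1-\vartheta_2(n-k)\big)$; (b) $\displaystyle\sum_{k=0}^{n}cl_b(k)\big(1-h(n-k)\big)=1$, with $h(0)=0$.
   Context: A Carlitz-binary composition of $m$ is an ordered sequence of powers of $2$ (including $1$) summing to $m$ in which each part differs from its adjacent parts. $cl_b(m)$ is the number of Carlitz-binary compositions of $m$, with $cl_b(0)=1$. $\vartheta_2$ is the $2$-adic valuation and $h(m)$ is the number of ones in the binary representation of $m$. *)

(* Defs.v *)
From mathcomp Require Import all_boot all_order all_algebra.
Set Implicit Arguments. Unset Strict Implicit. Unset Printing Implicit Defensive.

(* All compositions (ordered sequences of positive integers) of m,
   enumerated recursively by the first part; fuel >= m suffices. *)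
Fixpoint comps_aux (fuel m : nat) : seq (seq nat) :=
  if m is 0 then [:: [::]] else
  if fuel is f.+1 then
    flatten [seq [seq i :: s | s <- comps_aux f (m - i)] | i <- iota 1 m]
  else [::].

Definition compositions (m : nat) : seq (seq nat) := comps_aux m m.

Definition is_pow2 (x : nat) : bool := [exists k : 'I_x.+1, x == 2 ^ k].

(* Carlitz-binary composition of m: parts are powers of 2, sum to m,
   and adjacent parts are distinct. *)
Definition carlitz_binary (m : nat) (s : seq nat) : bool :=
  [&& all (fun x => 0 < x) s, all is_pow2 s, sumn s == m &
      sorted (fun a b => a != b) s].

(* number of Carlitz-binary compositions of m (cl_b 0 = 1: the empty one) *)
Definition cl_b (m : nat) : nat :=
  count (carlitz_binary m) (undup (compositions m)).

Definition v2 (m : nat) : nat := logn 2 m.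

(* number of ones in the binary representation of m (h 0 = 0) *)
Definition h (m : nat) : nat := \sum_(i < m.+1) odd (m %/ 2 ^ i).

(* Main.v *)
Require Import Defs.
From mathcomp Require Import all_boot all_order all_algebra zify.
Import GRing.Theory.
Set Warnings "-notation-overridden,-ambiguous-paths".

Lemma pow2P x : reflect (exists j, x = 2 ^ j) (is_pow2 x).
Proof.
apply: (iffP existsP) => [[k /eqP ->]|[j ->]]; first by exists k.
have hj : j < (2 ^ j).+1 by apply: ltnW; rewrite ltnS; apply: ltn_expl.
by exists (Ordinal hj).
Qed.

Lemma comps_mem fuel m s : m <= fuel -> all (fun x => 0 < x) s -> sumn s = m ->
  s \in comps_aux fuel m.
Proof.
elim: fuel m s => [|f IH] m s.
  rewrite leqn0 => /eqP -> ; case: s => [|x s] //= /andP[hx _]; lia.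
case: m => [|m] hm; first by case: s => [|x s] //= /andP[hx _]; lia.
case: s => [|x s] // /andP[hx hs] hsum; rewrite /= in hsum.
have -> : comps_aux f.+1 m.+1 =
  flatten [seq [seq i :: s | s <- comps_aux f (m.+1 - i)] | i <- iota 1 m.+1] by [].
apply/flatten_mapP; exists x; first by rewrite mem_iota; lia.
apply: map_f; apply: IH => //; lia.
Qed.

Definition okh t (s : seq nat) := if s is x :: _ then x != t else true.

Fixpoint gen (fuel n t : nat) : seq (seq nat) :=
  if n is 0 then [:: [::]] else
  if fuel is f.+1 then
    [seq 2 ^ j :: s | j <- [seq j <- iota 0 n | (2 ^ j <= n) && (2 ^ j != t)],
                      s <- gen f (n - 2 ^ j) (2 ^ j)]
  else [::].

Lemma gen_S f n t : gen f.+1 n.+1 t = flatten [seq [seq 2^j :: s | s <- gen f (n.+1 - 2^j) (2^j)]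
   | j <- [seq j <- iota 0 n.+1 | (2 ^ j <= n.+1) && (2 ^ j != t)]].
Proof. by []. Qed.

Lemma cb_cons n x s : carlitz_binary n (x :: s) =
  [&& is_pow2 x, x <= n, carlitz_binary (n - x) s & okh x s].
Proof.
rewrite /carlitz_binary /=.
have -> : path (fun a b => a != b) x s = okh x s && sorted (fun a b => a != b) s.
  by case: s => //= y s; rewrite eq_sym.
case p: (is_pow2 x) => /=; last by rewrite !andbF.
have hx : 0 < x by case/pow2P: p => j ->; rewrite expn_gt0.
rewrite hx /=.
case: (all (fun x => 0 < x) s); case: (all is_pow2 s); rewrite /= ?andbF //.
case: (leqP x n) => hxn /=.
  have -> : (x + sumn s == n) = (sumn s == n - x) by apply/eqP/eqP; lia.
  by case: (sumn s == n - x); case: (okh x s); case: (sorted _ s).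
have -> : (x + sumn s == n) = false by apply/eqP; lia.
by [].
Qed.

Lemma gen_mem fuel n t s : n <= fuel ->
  (s \in gen fuel n t) = carlitz_binary n s && okh t s.
Proof.
elim: fuel n t s => [|f IH] n t s.
  rewrite leqn0 => /eqP ->; rewrite /= inE.
  case: s => [|x s] //=; rewrite cb_cons; case p: (is_pow2 x) => //=.
  by case/pow2P: p => j ->; rewrite leqn0 expn_eq0.
case: n => [|n] hn.
  rewrite /= inE; case: s => [|x s] //=; rewrite cb_cons; case p: (is_pow2 x) => //=.
  by case/pow2P: p => j ->; rewrite leqn0 expn_eq0.
have -> : gen f.+1 n.+1 t = flatten [seq [seq 2^j :: s | s <- gen f (n.+1 - 2^j) (2^j)]
   | j <- [seq j <- iota 0 n.+1 | (2 ^ j <= n.+1) && (2 ^ j != t)]] by [].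
apply/idP/idP.
  move=> /flatten_mapP[j]; rewrite mem_filter => /andP[/andP[hjn hjt] _].
  move=> /mapP[s' hs' ->]; rewrite IH in hs'; last first.
    have := expn_gt0 2 j; lia.
  rewrite cb_cons /= hjt andbT; case/andP: hs' => -> ->; rewrite hjn andbT.
  by rewrite andbT; apply/pow2P; exists j.
case: s => [|x s]; first by move=> /andP[/and4P[_ _ /eqP]].
rewrite cb_cons => /andP[/and4P[/pow2P[j ->] hjn hc ho] ht0].
have ht : 2 ^ j != t := ht0.
apply/flatten_mapP; exists j.
  rewrite mem_filter hjn ht mem_iota /=; have := ltn_expl j (isT : 1 < 2); lia.
apply: map_f; rewrite IH ?hc ?ho //; have := expn_gt0 2 j; lia.
Qed.

Lemma gen_uniq fuel n t : uniq (gen fuel n t).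
Proof.
elim: fuel n t => [|f IH] [|n] t //; rewrite gen_S.
apply: allpairs_uniq_dep.
- by apply: filter_uniq; apply: iota_uniq.
- by move=> x _; apply: IH.
- move=> [a u] [b v] _ _ /= [/eqP]; rewrite eqn_exp2l // => /eqP ea.
  by subst b => ->.
Qed.

Definition G n t := size (gen n n t).

Lemma gen_size f n t : n <= f -> size (gen f n t) = G n t.
Proof.
move=> hf; apply: perm_size; apply: uniq_perm; try exact: gen_uniq.
by move=> s; rewrite !gen_mem.
Qed.

Lemma clb_G n : cl_b n = G n 0.
Proof.
rewrite /cl_b -size_filter /G; apply: perm_size; apply: uniq_perm.
- exact/filter_uniq/undup_uniq.
- exact: gen_uniq.
move=> s; rewrite mem_filter mem_undup gen_mem //.
case P: (carlitz_binary n s) => //=.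
have -> : okh 0 s.
  case: s P => [|x s] //; rewrite cb_cons => /andP[/pow2P[j ->] _] /=.
  by rewrite expn_eq0.
apply: comps_mem => //.
- by case/and4P: P.
- by case/and4P: P => _ _ /eqP.
Qed.

Lemma G0 t : G 0 t = 1. Proof. by []. Qed.

Lemma G_S n t : G n.+1 t =
  \sum_(0 <= j < n.+1 | (2 ^ j <= n.+1) && (2 ^ j != t)) G (n.+1 - 2 ^ j) (2 ^ j).
Proof.
rewrite /G gen_S size_flatten /shape -map_comp sumnE big_map big_filter.
apply: eq_bigr => j _ /=; rewrite size_map gen_size //.
have := expn_gt0 2 j; lia.
Qed.

Lemma G_rel j0 m : G m 0 = G m (2 ^ j0) + (if 2 ^ j0 <= m then G (m - 2 ^ j0) (2 ^ j0) else 0).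
Proof.
case: m => [|m]; first by rewrite !G0 leqn0 expn_eq0.
rewrite !G_S (bigID (fun j => 2 ^ j != 2 ^ j0)) /=.
congr (_ + _).
  by apply: eq_bigl => j; rewrite expn_eq0 andbT.
rewrite big_mkcond /=; case: ifP => hj.
  have hm : j0 \in index_iota 0 m.+1.
    rewrite mem_index_iota; have := ltn_expl j0 (isT : 1 < 2); lia.
  rewrite (bigD1_seq j0 hm (iota_uniq _ _)) /=.
  rewrite hj expn_eq0 eqxx /= big1 ?addn0 // => j hj'.
  by rewrite eqn_exp2l // (negbTE hj') andbF.
rewrite big1 // => j _; case: ifP => // /andP[/andP[h1 _] /negPn/eqP e].
by rewrite e hj in h1.
Qed.

Definition hb B m := (\sum_(0 <= i < B) odd (m %/ 2 ^ i))%N.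

Lemma h_hb m : h m = hb m.+1 m.
Proof. by rewrite /hb big_mkord. Qed.

Lemma hb_big B m B' : m < 2 ^ B -> B <= B' -> hb B' m = hb B m.
Proof.
move=> hm hB; rewrite /hb (big_cat_nat (n := B)) //= [X in _ + X]big1_seq ?addn0 //.
move=> i /andP[_]; rewrite mem_index_iota => /andP[hi _].
rewrite divn_small //; apply: (leq_trans hm); by rewrite leq_exp2l.
Qed.

Lemma hb_stable B B' m : m < 2 ^ B -> m < 2 ^ B' -> hb B m = hb B' m.
Proof.
move=> h1 h2; case: (leqP B B') => hB; first by rewrite (hb_big _ _ _ h1 hB).
by rewrite (hb_big _ _ _ h2 (ltnW hB)).
Qed.

Lemma hb_S B m : hb B.+1 m = odd m + hb B m./2.
Proof.
rewrite /hb big_nat_recl // expn0 divn1; congr (_ + _).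
by apply: eq_bigr => i _; rewrite expnS divnMA divn2.
Qed.

Lemma h_even a : h a.*2 = h a.
Proof.
have ha := ltn_expl a (isT : 1 < 2).
rewrite !h_hb (@hb_stable _ a.+2); last first.
- rewrite !expnS; lia.
- have := ltn_expl a.*2.+1 (isT : 1 < 2); lia.
by rewrite hb_S odd_double doubleK.
Qed.

Lemma h_odd a : h a.*2.+1 = (h a).+1.
Proof.
have ha := ltn_expl a (isT : 1 < 2).
rewrite !h_hb (@hb_stable _ a.+2); last first.
- rewrite !expnS; lia.
- have := ltn_expl a.*2.+2 (isT : 1 < 2); lia.
rewrite hb_S /= odd_double /=.
by rewrite uphalf_double.
Qed.

Lemma hkey m : h m.+1 + v2 m.+1 = (h m).+1.
Proof.
elim/ltn_ind: m => m IH.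
have e := odd_double_half m.
case o: (odd m) e => /= e.
  set a := m./2 in e *.
  have -> : m.+1 = (a.+1).*2 by lia.
  rewrite -e h_even h_odd /v2 -mul2n lognM // -/(v2 a.+1).
  have -> : logn 2 2 = 1 by [].
  have := IH a ltac:(lia); lia.
set a := m./2 in e *.
rewrite -e add0n h_odd h_even /v2 logn_coprime ?addn0 //.
by rewrite coprime2n /= odd_double.
Qed.
Local Open Scope ring_scope.

Definition Ci k : int := (G k 0)%:Z.
Definition sg (e : nat) : int := (-1) ^+ e.
Definition T n i : int :=
  \sum_(0 <= k < n) (if (i %| n - k)%N then sg ((n - k) %/ i).-1 else 0) * Ci k.

Lemma nodvd i d : (0 < d)%N -> (d < i)%N -> (i %| d)%N = false.
Proof. move=> h1 h2; apply/negP => /(dvdn_leq h1); lia. Qed.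

Lemma T_small n i : (n < i)%N -> T n i = 0.
Proof.
move=> hn; rewrite /T big1_seq // => k /andP[_]; rewrite mem_index_iota => hk.
rewrite nodvd ?mul0r //; lia.
Qed.

Lemma T_rec n i : (0 < i)%N -> (i <= n)%N -> T n i = Ci (n - i) - T (n - i) i.
Proof.
move=> hi hin; rewrite /T (big_cat_nat (n := n - i)) //=; last by lia.
rewrite [X in _ + X = _](big_ltn); last by lia.
have -> : (n - (n - i) = i)%N by lia.
rewrite dvdnn divnn hi /= mul1r.
rewrite [X in _ + (_ + X) = _]big1_seq ?addr0; last first.
  move=> k /andP[_]; rewrite mem_index_iota => hk; rewrite nodvd ?mul0r //; lia.
rewrite addrC; congr (_ + _); rewrite -sumrN; apply: eq_big_nat => k hk.
have e : (n - k = (n - i - k) + i)%N by lia.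
rewrite e dvdn_addl //; case: ifP => hd; last by rewrite mul0r oppr0.
rewrite divnDl // divnn hi addn1 /=.
have q0 : (0 < (n - i - k) %/ i)%N by rewrite divn_gt0 //; apply: dvdn_leq => //; lia.
rewrite -{1}(prednK q0) /sg exprS mulN1r mulNr //.
Qed.

Lemma UT j n : ((if (2 ^ j <= n)%N then G (n - 2 ^ j) (2 ^ j) else 0%N)%:Z) = T n (2 ^ j).
Proof.
have hi : (0 < 2 ^ j)%N by rewrite expn_gt0.
elim/ltn_ind: n => n IH.
case: ifP => hin; last by rewrite T_small //; lia.
rewrite T_rec // -IH; last by lia.
have := G_rel j (n - 2 ^ j); rewrite /Ci => ->.
by rewrite PoszD addrK.
Qed.

Lemma sg_pred q : (0 < q)%N -> sg q.-1 = if odd q then 1 else -1.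
Proof. by case: q => // q _; rewrite /sg -signr_odd /=; case: (odd q). Qed.

Lemma par j N : (2 ^ j %| N)%N -> odd (N %/ 2 ^ j) = ~~ (2 ^ j.+1 %| N)%N.
Proof.
move=> h; rewrite -{2}(divnK h) expnS dvdn_pmul2r ?expn_gt0 // dvdn2 negbK //.
Qed.

Lemma NT N B : (0 < N)%N -> (N <= B)%N ->
  \sum_(0 <= j < B) (if (2 ^ j %| N)%N then sg ((N %/ 2 ^ j).-1) else 0)
  = 1 - (v2 N)%:Z.
Proof.
move=> hN hB; set v := v2 N.
have hdv j : (2 ^ j %| N)%N = (j <= v)%N by rewrite pfactor_dvdn.
have hv : (v < N)%N.
  have : (2 ^ v <= N)%N by apply: dvdn_leq => //; rewrite hdv.
  have := ltn_expl v (isT : (1 < 2)%N); lia.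
have q0 j : (j <= v)%N -> (0 < N %/ 2 ^ j)%N.
  by move=> hj; rewrite divn_gt0 ?expn_gt0 //; apply: dvdn_leq => //; rewrite hdv.
rewrite (big_cat_nat (n := v.+1)) //=; try lia.
rewrite [X in _ + X]big1_seq ?addr0; last first.
  move=> j /andP[_]; rewrite mem_index_iota hdv => hj.
  by have -> : (j <= v)%N = false by lia.
rewrite big_nat_recr //= hdv leqnn sg_pred ?q0 // par ?hdv // ltnn /=.
rewrite (eq_big_nat _ _ (F2 := fun _ => -1)); last first.
  move=> j hj; rewrite hdv; have hj' : (j <= v)%N by lia.
  rewrite hj' sg_pred ?q0 // par ?hdv //.
  by have -> : (j.+1 <= v)%N by lia.
rewrite sumr_const_nat subn0 mulNrn natz; lia.
Qed.

Lemma Posz_sum (r : seq nat) (F : nat -> nat) :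
  Posz (\sum_(j <- r) F j)%N = \sum_(j <- r) (F j)%:Z.
Proof. by elim: r => [|a r IH]; rewrite ?big_nil // !big_cons PoszD IH. Qed.

Lemma Ci_rec n : (0 < n)%N -> Ci n = \sum_(0 <= k < n) Ci k * (1 - (v2 (n - k))%:Z).
Proof.
case: n => // n _.
rewrite /Ci G_S big_mkcond Posz_sum.
rewrite (eq_bigr (fun j => T n.+1 (2 ^ j))); last first.
  by move=> j _; rewrite expn_eq0 andbT -UT.
rewrite /T exchange_big /=; apply: eq_big_nat => k hk.
rewrite -mulr_suml NT; [by rewrite mulrC | lia | lia].
Qed.

Lemma partA n : (0 < n)%N ->
  (cl_b n)%:Z = \sum_(0 <= k < n) (cl_b k)%:Z * (1 - (v2 (n - k))%:Z).
Proof.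
move=> hn; rewrite clb_G -/(Ci n) (Ci_rec _ hn).
by apply: eq_bigr => k _; rewrite clb_G.
Qed.

Lemma hkeyZ m : (h m.+1)%:Z = (h m)%:Z + 1 - (v2 m.+1)%:Z.
Proof. have := hkey m; lia. Qed.

Lemma partB n : \sum_(0 <= k < n.+1) (cl_b k)%:Z * (1 - (h (n - k))%:Z) = 1.
Proof.
elim: n => [|n IH].
  by rewrite big_nat1 subnn clb_G G0 /h big_ord1.
rewrite big_nat_recr //= subnn.
have -> : h 0 = 0%N by rewrite /h big_ord1.
rewrite mulr1 (eq_big_nat _ _ (F2 := fun k => (cl_b k)%:Z * (1 - (h (n - k))%:Z)
   - (cl_b k)%:Z * (1 - (v2 (n.+1 - k))%:Z))); last first.
  move=> k hk; have -> : (n.+1 - k = (n - k).+1)%N by lia.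
  rewrite hkeyZ; lia.
rewrite sumrB IH -partA //; lia.
Qed.

Theorem corollary10 (n : nat) (hn : (0 < n)%N) :
  ((cl_b n)%:Z = \sum_(0 <= k < n) (cl_b k)%:Z * (1 - (v2 (n - k))%:Z))
  /\ (\sum_(0 <= k < n.+1) (cl_b k)%:Z * (1 - (h (n - k))%:Z) = 1).
Proof. split; [exact: partA | exact: partB]. Qed.
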